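(* Let $W\in\mathbb{R}^{n\times n}$ be the signed adjacency matrix of a signed digraph with $W\mathbf{1}=\mathbf{1}$. If $W$ is eventually stochastic, or if $W$ is weight balanced ($W^\top\mathbf{1}=\mathbf{1}$) with the eigenvalue $1$ simple and strictly dominant, then $W$ is irreducible (equivalently, the digraph is strongly connected).
   Context: $W$ is a real matrix (entries of any sign); the digraph has an edge from $j$ to $i$ iff $W_{ij}\neq0$. $W$ is eventually positive if there is $t_0\in\mathbb{Z}_{\ge0}$ with $W^t$ entrywise positive for all integers $t\ge t_0$; eventually stochastic means eventually positive and $W\mathbf{1}=\mathbf{1}$. ''The eigenvalue $1$ is simple and strictly dominant'' means $1$ has algebraic multiplicity one and $|\lambda|<1$ for every other eigenvalue. $W$ is irreducible if there is no permutation matrix $P$ with $P^\top WP$ block upper triangular with two nontrivial square diagonal blocks. *)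

(* Defs.v *)
From HB Require Import structures.
From mathcomp Require Import all_boot all_order all_algebra all_fingroup.
From mathcomp Require Import reals.
From mathcomp Require Import complex.
Set Implicit Arguments. Unset Strict Implicit. Unset Printing Implicit Defensive.
Import Order.TTheory GRing.Theory Num.Theory.
Local Open Scope ring_scope.
Local Open Scope complex_scope.

Definition ones (R : pzRingType) (n : nat) : 'cV[R]_n := const_mx 1.

Definition eventually_positive (R : realType) (n : nat) (W : 'M[R]_n) : Prop :=
  exists t0 : nat, forall t : nat, (t0 <= t)%N ->
    forall i j : 'I_n, 0 < (W ^+ t) i j.

Definition eventually_stochastic (R : realType) (n : nat) (W : 'M[R]_n) : Prop :=
  eventually_positive W /\ W *m ones R n = ones R n.

Definition char_polyC (R : realType) (n : nat) (W : 'M[R]_n) : {poly R[i]} :=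
  map_poly (fun x : R => x%:C) (char_poly W).

Definition one_simple_strictly_dominant (R : realType) (n : nat) (W : 'M[R]_n) : Prop :=
  mup 1 (char_polyC W) = 1%N /\
  forall z : R[i], root (char_polyC W) z -> z != 1 -> `|z| < 1.

(* Irreducibility: no permutation matrix P such that P^T W P is block upper
   triangular with two nontrivial square diagonal blocks (sizes k and n-k,
   0 < k < n), i.e. whose lower-left (n-k) x k block vanishes. *)
Definition irreducible_mx (R : pzRingType) (n : nat) (W : 'M[R]_n) : Prop :=
  ~ exists (s : 'S_n) (k : nat), [/\ (0 < k)%N, (k < n)%N &
      forall i j : 'I_n, (k <= i)%N -> (j < k)%N ->
        ((perm_mx s)^T *m W *m perm_mx s) i j = 0].

(* Main.v *)
Require Import Defs.
From HB Require Import structures.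
From mathcomp Require Import all_boot all_order all_algebra all_fingroup.
From mathcomp Require Import reals complex.
Import Order.TTheory GRing.Theory Num.Theory.
Local Open Scope ring_scope.

Lemma permT_mul (R : comNzRingType) n (s : 'S_n) :
  (perm_mx s)^T *m perm_mx s = 1%:M :> 'M[R]_n.
Proof. by rewrite tr_perm_mx -perm_mxM mulVg perm_mx1. Qed.

Lemma perm_mulT (R : comNzRingType) n (s : 'S_n) :
  perm_mx s *m (perm_mx s)^T = 1%:M :> 'M[R]_n.
Proof. by rewrite tr_perm_mx -perm_mxM mulgV perm_mx1. Qed.

Lemma conj_perm_entry (R : comNzRingType) n (s : 'S_n) (M : 'M[R]_n) i j :
  ((perm_mx s)^T *m M *m perm_mx s) i j = M (s^-1 i)%g (s^-1 j)%g.
Proof.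
have -> : perm_mx s = perm_mx (s^-1)^-1 :> 'M[R]_n by rewrite invgK.
by rewrite tr_perm_mx invgK -row_permE -col_permE !mxE.
Qed.

Lemma conj_perm_exp (R : comNzRingType) n (s : 'S_n) (M : 'M[R]_n) t :
  ((perm_mx s)^T *m M *m perm_mx s) ^+ t = (perm_mx s)^T *m M ^+ t *m perm_mx s.
Proof.
elim: t => [|t IH]; first by rewrite !expr0 mulmx1 permT_mul.
rewrite !exprSr IH -!mulmxE !mulmxA; congr (_ *m _).
by rewrite -(mulmxA _ (perm_mx s)) perm_mulT mulmx1.
Qed.

Lemma block_exp_zero (R : comNzRingType) n (B : 'M[R]_n) k t :
  (forall i j : 'I_n, (k <= i)%N -> (j < k)%N -> B i j = 0) ->
  (forall i j : 'I_n, (k <= i)%N -> (j < k)%N -> (B ^+ t) i j = 0).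
Proof.
move=> HB; elim: t => [|t IH] i j ki jk.
  rewrite expr0 !mxE; case: eqP => // eij; move: ki jk; rewrite eij => a b.
  by move: (leq_trans b a); rewrite ltnn.
rewrite exprSr -mulmxE !mxE big1 // => l _.
case: (ltnP l k) => lk; first by rewrite IH // mul0r.
by rewrite HB // mulr0.
Qed.

Lemma char_poly_conj_perm (R : comNzRingType) n (s : 'S_n) (M : 'M[R]_n) :
  char_poly ((perm_mx s)^T *m M *m perm_mx s) = char_poly M.
Proof.
rewrite /char_poly.
have -> : char_poly_mx ((perm_mx s)^T *m M *m perm_mx s) =
  (perm_mx s)^T *m char_poly_mx M *m perm_mx s.
  rewrite /char_poly_mx tr_perm_mx !map_mxM !map_perm_mx -tr_perm_mx.
  rewrite mulmxBr mulmxBl; congr (_ - _).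
  by rewrite mul_mx_scalar -scalemxAl permT_mul scalemx1.
rewrite !det_mulmx det_tr det_perm mulrC mulrA -expr2 -exprM mulnC exprM sqrrN expr1n.
by rewrite expr1n mul1r.
Qed.

Lemma char_poly_ublock (R : comNzRingType) n1 n2 (A : 'M[R]_n1) C (D : 'M[R]_n2) :
  char_poly (block_mx A C 0 D) = char_poly A * char_poly D.
Proof.
rewrite /char_poly /char_poly_mx map_block_mx map_mx0 (scalar_mx_block n1 n2).
by rewrite opp_block_mx add_block_mx oppr0 addr0 det_ublock.
Qed.

Lemma char_poly_tr (R : comNzRingType) n (A : 'M[R]_n) :
  char_poly A^T = char_poly A.
Proof.
rewrite /char_poly -det_tr; congr (\det _).
by apply/matrixP => i j; rewrite !mxE eq_sym.
Qed.

Lemma perm_ones (R : pzRingType) n (s : 'S_n) :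
  perm_mx s *m ones R n = ones R n.
Proof. by rewrite -row_permE /ones row_perm_const. Qed.

Lemma permT_ones (R : pzRingType) n (s : 'S_n) :
  (perm_mx s)^T *m ones R n = ones R n.
Proof. by rewrite tr_perm_mx perm_ones. Qed.

Lemma case2 (R : realType) k m (B : 'M[R]_(k + m)) :
  (0 < k)%N -> (0 < m)%N ->
  (forall i j : 'I_(k+m), (k <= i)%N -> (j < k)%N -> B i j = 0) ->
  B *m ones R _ = ones R _ -> B^T *m ones R _ = ones R _ ->
  (1 < mup 1 (map_poly (real_complex R) (char_poly B)))%N.
Proof.
move=> k0 m0 HB B1 BT1.
have dl0 : dlsubmx B = 0.
  apply/matrixP => i j; rewrite !mxE; apply: HB => /=; first exact: leq_addr.
  exact: ltn_ord.
rewrite -(submxK B) dl0 in B1 BT1 *.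
set A := ulsubmx B in B1 BT1 *; set Cm := ursubmx B in B1 BT1 *;
  set D := drsubmx B in B1 BT1 *.
have onesE : forall p q, ones R (p + q) = col_mx (ones R p) (ones R q).
  by move=> p q; rewrite /ones col_mx_const.
rewrite onesE mul_block_col in B1.
have [_ D1] := eq_col_mx B1.
rewrite tr_block_mx trmx0 onesE mul_block_col in BT1.
have [AT1 _] := eq_col_mx BT1.
rewrite mul0mx add0r in D1; rewrite mul0mx addr0 in AT1.
have rA : root (char_poly A) 1.
  rewrite -eigenvalue_root_char; apply/eigenvalueP.
  exists (ones R k)^T; first by rewrite -[A]trmxK -trmx_mul AT1 scale1r.
  apply/eqP => /matrixP /(_ 0 (Ordinal k0)); rewrite !mxE => /eqP.
  by rewrite oner_eq0.
have rD : root (char_poly D) 1.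
  rewrite -char_poly_tr -eigenvalue_root_char; apply/eigenvalueP.
  exists (ones R m)^T; first by rewrite -trmx_mul D1 scale1r.
  apply/eqP => /matrixP /(_ 0 (Ordinal m0)); rewrite !mxE => /eqP.
  by rewrite oner_eq0.
rewrite char_poly_ublock rmorphM /=.
have nz : forall p (M : 'M[R]_p), map_poly (real_complex R) (char_poly M) != 0.
  by move=> p M; rewrite map_poly_eq0 monic_neq0 // char_poly_monic.
rewrite mupM //.
have pos : forall p (M : 'M[R]_p), root (char_poly M) 1 ->
    (0 < mup 1 (map_poly (real_complex R) (char_poly M)))%N.
  move=> p M rM; rewrite -XsubC_dvd // dvdp_XsubCl.
  by rewrite -(rmorph1 (real_complex R)) fmorph_root.
exact: (leq_add (pos _ _ rA) (pos _ _ rD)).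
Qed.

Theorem lemma7 (R : realType) (n : nat) (W : 'M[R]_n) :
  W *m ones R n = ones R n ->
  (eventually_stochastic W \/
   (W^T *m ones R n = ones R n /\ one_simple_strictly_dominant W)) ->
  irreducible_mx W.
Proof.
move=> HW Hcase [s [k [k0 kn HB]]].
case: Hcase => [[[t0 Hpos] _] | [HT [Hmup _]]].
  have := @block_exp_zero _ _ _ _ t0 HB (Ordinal kn) (Ordinal (ltn_trans k0 kn)) (leqnn k) k0.
  rewrite conj_perm_exp conj_perm_entry => H0.
  by move: (Hpos t0 (leqnn t0) (s^-1 (Ordinal kn))%g (s^-1 (Ordinal (ltn_trans k0 kn)))%g);
    rewrite H0 ltxx.
have [m Hm] : exists m, n = (k + m)%N by exists (n - k)%N; rewrite subnKC // ltnW.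
subst n.
have m0 : (0 < m)%N by rewrite -(ltn_add2l k) addn0.
have B1 : ((perm_mx s)^T *m W *m perm_mx s) *m ones R (k + m) = ones R (k + m).
  by rewrite -!mulmxA perm_ones HW tr_perm_mx perm_ones.
have BT1 : ((perm_mx s)^T *m W *m perm_mx s)^T *m ones R (k + m) = ones R (k + m).
  by rewrite !trmx_mul trmxK -!mulmxA tr_perm_mx perm_ones HT perm_ones.
have := @case2 R k m _ k0 m0 HB B1 BT1.
rewrite char_poly_conj_perm.
by move: Hmup; rewrite /char_polyC => ->.
Qed.
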